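(* Let $\mathcal{O}$ be an order in a number field $K$, and let $\mathfrak{m}_1,\mathfrak{m}_2$ be nonzero integral ideals of $\mathcal{O}$. Then: (1) $\{\mathfrak p \text{ prime}:\mathfrak{m}_1\subseteq\mathfrak{p}\}\subseteq\{\mathfrak p\text{ prime}:\mathfrak{m}_2\subseteq\mathfrak{p}\}$ if and only if $I_{\mathfrak{m}_2}(\mathcal{O})\subseteq I_{\mathfrak{m}_1}(\mathcal{O})$; (2) if $I_{\mathfrak{m}_2}(\mathcal{O})\subseteq I_{\mathfrak{m}_1}(\mathcal{O})$, then $J^*_{\mathfrak{m}_2}(\mathcal{O})\subseteq J^*_{\mathfrak{m}_1}(\mathcal{O})$; (3) for any nonzero $\mathcal{O}$-ideal $\mathfrak{m}$ there exists an invertible integral ideal $\widetilde{\mathfrak{m}}\in I^*(\mathcal{O})$ with $\widetilde{\mathfrak{m}}\subseteq\mathfrak{m}$ and $I_{\mathfrak{m}}(\mathcal{O})=I_{\widetilde{\mathfrak{m}}}(\mathcal{O})$ (and hence $J^*_{\mathfrak{m}}(\mathcal{O})=J^*_{\widetilde{\mathfrak{m}}}(\mathcal{O})$).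
   Context: An order is a subring of $K$ containing $1$ that is free of rank $[K:\mathbb Q]$ over $\mathbb Z$. In (1), $\mathfrak p$ ranges over prime ideals of $\mathcal O$. $I_{\mathfrak m}(\mathcal O)$ is the set of integral $\mathcal O$-ideals $\mathfrak a$ with $\mathfrak a+\mathfrak m=\mathcal O$; $I^*(\mathcal O)$ is the set of invertible integral ideals (integral $\mathfrak a$ with $\mathfrak a\mathfrak b=\gamma\mathcal O$ for some integral $\mathfrak b$ and nonzero $\gamma$). $J^*_{\mathfrak m}(\mathcal O)$ is the group of invertible fractional $\mathcal O$-ideals coprime to $\mathfrak m$, i.e. of the form $\mathfrak a\mathfrak b^{-1}$ with $\mathfrak a,\mathfrak b$ invertible integral ideals coprime to $\mathfrak m$ (fractional ideal: $\mathcal O$-submodule $\mathfrak a\subseteq K$ with $\lambda\mathfrak a\subseteq\mathcal O$ for some $\lambda\in K^\times$; invertible: $\mathfrak a\mathfrak b=\mathcal O$ for a fractional $\mathfrak b$). *)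

(* Defs.v *)
From HB Require Import structures.
From mathcomp Require Import all_boot all_order all_algebra all_field.
Set Implicit Arguments. Unset Strict Implicit. Unset Printing Implicit Defensive.
Import Order.TTheory GRing.Theory Num.Theory.
Local Open Scope ring_scope.

Section OrderDefs.
Variable K : fieldExtType rat.

Definition seteq (A B : K -> Prop) := forall x, A x <-> B x.
Definition subsetK (A B : K -> Prop) := forall x, A x -> B x.

Definition is_order (O : K -> Prop) :=
  [/\ O 1,
      (forall x y, O x -> O y -> O (x - y)),
      (forall x y, O x -> O y -> O (x * y)) &
      exists b : 'I_(\dim {:K}) -> K,
        (forall x, O x <-> exists z : 'I_(\dim {:K}) -> int, x = \sum_i b i *~ z i) /\
        (forall z : 'I_(\dim {:K}) -> int, \sum_i b i *~ z i = 0 -> forall i, z i = 0)].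

Definition is_Omodule (O A : K -> Prop) :=
  [/\ A 0, (forall x y, A x -> A y -> A (x + y)) &
      (forall r x, O r -> A x -> A (r * x))].

Definition is_ideal (O I : K -> Prop) := is_Omodule O I /\ subsetK I O.

Definition nonzero_set (I : K -> Prop) := exists x, I x /\ x != 0.

Definition is_prime_ideal (O P : K -> Prop) :=
  [/\ is_ideal O P, ~ P 1 &
      forall a b, O a -> O b -> P (a * b) -> P a \/ P b].

Definition is_frac_ideal (O A : K -> Prop) :=
  is_Omodule O A /\ exists l : K, l != 0 /\ forall x, A x -> O (l * x).

Definition idmul (A B : K -> Prop) : K -> Prop := fun x =>
  exists s : seq (K * K), (forall p, p \in s -> A p.1 /\ B p.2) /\
                          x = \sum_(p <- s) p.1 * p.2.

Definition idadd (A B : K -> Prop) : K -> Prop := fun x =>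
  exists y z, A y /\ B z /\ x = y + z.

Definition idinv (O B : K -> Prop) : K -> Prop := fun x =>
  forall y, B y -> O (x * y).

Definition principal (O : K -> Prop) (g : K) : K -> Prop := fun x =>
  exists r, O r /\ x = g * r.

Definition inv_integral (O A : K -> Prop) :=
  is_ideal O A /\ exists (B : K -> Prop) (g : K),
    is_ideal O B /\ g != 0 /\ seteq (idmul A B) (principal O g).

Definition coprime_to (O A M : K -> Prop) := seteq (idadd A M) O.

Definition I_m (O M A : K -> Prop) := is_ideal O A /\ coprime_to O A M.

Definition J_m (O M A : K -> Prop) :=
  exists A0 B0 : K -> Prop,
    [/\ inv_integral O A0, inv_integral O B0, coprime_to O A0 M,
        coprime_to O B0 M & seteq A (idmul A0 (idinv O B0))].

End OrderDefs.

(* Main.v *)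
Require Import Defs.
From HB Require Import structures.
From mathcomp Require Import all_boot all_order all_algebra all_field.
From mathcomp Require Import ring zify.
From Stdlib Require ClassicalEpsilon Classical.
Import Order.TTheory GRing.Theory Num.Theory.
Local Open Scope ring_scope.
Set Implicit Arguments. Unset Strict Implicit.

Lemma common_den {I : finType} (q : I -> rat) :
  exists D : nat, (0 < D)%N /\ exists z : I -> int, forall i, (z i)%:~R = D%:R * q i.
Proof.
exists (\prod_i `|denq (q i)|%N)%N; split.
  by rewrite prodn_gt0 // => i; rewrite absz_gt0 denq_neq0.
exists (fun i => numq (q i) * (\prod_(j | j != i) `|denq (q j)|%N)%:Z).
move=> i; rewrite [in RHS](bigD1 i) //= natrM rmorphM /= numqE.
have E : forall x : int, 0 < x -> (`|x|%N%:R : rat) = x%:~R.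
  by move=> x hx; rewrite natr_absz; congr intmul; apply: gtz0_abs.
rewrite E ?denq_gt0 //. rewrite -[X in _ = _ * X * _]pmulrn. ring.
Qed.

Section Ord.
Variable K : fieldExtType rat.
Variable O : K -> Prop.
Variable b : 'I_(\dim {:K}) -> K.
Hypothesis O1 : O 1.
Hypothesis OB : forall x y, O x -> O y -> O (x - y).
Hypothesis OM : forall x y, O x -> O y -> O (x * y).
Hypothesis Ospan : forall x, O x <-> exists z : 'I_(\dim {:K}) -> int, x = \sum_i b i *~ z i.
Hypothesis Oind : forall z : 'I_(\dim {:K}) -> int, \sum_i b i *~ z i = 0 -> forall i, z i = 0.

Lemma denom_exists y : exists n : nat, (0 < n)%N /\ O (n%:R * y).
Proof.
pose X := [tuple b i | i < \dim {:K}].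
have Xi (i : 'I_(\dim {:K})) : X`_i = b i by rewrite nth_mktuple.
have freeX : free X.
  apply/freeP => k Hk i.
  have [D [D0 [z Hz]]] := common_den (k : _ -> rat).
  have : \sum_i b i *~ z i = 0.
    transitivity (D%:R *: \sum_i k i *: X`_i); last by rewrite Hk scaler0.
    rewrite scaler_sumr; apply: eq_bigr => j _.
    by rewrite -scaler_int Hz scalerA Xi.
  move/Oind/(_ i)/eqP; rewrite -(intr_eq0 rat) Hz mulf_eq0 pnatr_eq0.
  by case/orP => /eqP // D00; rewrite D00 in D0.
have bX : basis_of fullv X by rewrite basisEfree freeX subvf size_tuple leqnn.
have Hy : y = \sum_i coord X i y *: X`_i by apply: coord_span; rewrite (span_basis bX) memvf.
have [D [D0 [z Hz]]] := common_den (fun i => coord X i y).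
exists D; split => //; apply/Ospan; exists z.
rewrite {1}Hy mulr_natl -scaler_nat scaler_sumr; apply: eq_bigr => j _.
by rewrite -scaler_int Hz scalerA Xi.
Qed.

Lemma O0 : O 0. Proof. by rewrite -(subrr 1); apply: OB. Qed.
Lemma ON x : O x -> O (- x). Proof. by move=> h; rewrite -sub0r; apply: OB => //; apply: O0. Qed.
Lemma OD x y : O x -> O y -> O (x + y).
Proof. by move=> hx hy; rewrite -[y]opprK; apply: OB => //; apply: ON. Qed.
Lemma Onat m : O m%:R.
Proof. elim: m => [|m IH]; first exact: O0. by rewrite mulrSr; apply: OD. Qed.
Lemma Opow x m : O x -> O (x ^+ m).
Proof. move=> hx; elim: m => [|m IH]; first by rewrite expr0. by rewrite exprS; apply: OM. Qed.

Definition coordz (x : K) : {ffun 'I_(\dim {:K}) -> int} :=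
  ClassicalEpsilon.epsilon (inhabits [ffun=> 0]) (fun z => x = \sum_i b i *~ z i).

Lemma coordzP x : O x -> x = \sum_i b i *~ coordz x i.
Proof.
move/Ospan => [z Hz]; rewrite /coordz.
apply: (ClassicalEpsilon.epsilon_spec (inhabits [ffun=> 0]) (fun z => x = \sum_i b i *~ z i)).
by exists [ffun i => z i]; rewrite Hz; apply: eq_bigr => i _; rewrite ffunE.
Qed.

Definition pb (P : Prop) : bool :=
  if ClassicalEpsilon.excluded_middle_informative P then true else false.
Lemma pbP P : pb P <-> P.
Proof. by rewrite /pb; case: ClassicalEpsilon.excluded_middle_informative. Qed.

Section Modn.
Variable n : nat.
Let N : K := n.+1%:R.

Definition cls (x : K) : {ffun 'I_(\dim {:K}) -> 'I_n.+1} :=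
  [ffun i => inord `|(coordz x i %% n.+1%:Z)%Z|%N].

Lemma cls_cong x y : O x -> O y -> cls x = cls y -> exists w, O w /\ x - y = N * w.
Proof.
move=> hx hy /ffunP E.
pose q i := ((coordz x i - coordz y i) %/ n.+1%:Z)%Z.
have Hq i : q i * n.+1%:Z = coordz x i - coordz y i.
  apply: divzK; rewrite -eqz_mod_dvd; apply/eqP.
  have := E i; rewrite !ffunE => /(congr1 (@nat_of_ord _)); rewrite !inordK; last 2 first.
  - by rewrite -ltz_nat gez0_abs ?modz_ge0 // ltz_pmod.
  - by rewrite -ltz_nat gez0_abs ?modz_ge0 // ltz_pmod.
  by move/(congr1 Posz); rewrite !gez0_abs ?modz_ge0.
exists (\sum_i b i *~ q i); split; first by apply/Ospan; exists q.
rewrite {1}(coordzP hx) {1}(coordzP hy) -sumrB mulr_sumr; apply: eq_bigr => i _.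
by rewrite -mulrzBr -Hq mulrzA -mulrzr mulrC.
Qed.

Section Ideals.
Variable I : K -> Prop.
Hypothesis hI : is_ideal O I.
Lemma id0 : I 0. Proof. by case: hI => -[]. Qed.
Lemma idD x y : I x -> I y -> I (x + y). Proof. by case: hI => -[] _ h _ _; apply: h. Qed.
Lemma idM r x : O r -> I x -> I (r * x). Proof. by case: hI => -[] _ _ h _; apply: h. Qed.
Lemma idMr r x : O r -> I x -> I (x * r). Proof. by rewrite mulrC; apply: idM. Qed.
Lemma idO x : I x -> O x. Proof. by case: hI => _; apply. Qed.
Lemma idB x y : I x -> I y -> I (x - y).
Proof.
move=> hx hy; apply: idD => //; rewrite -mulN1r; apply: idM => //.
by apply: ON.
Qed.
Lemma idpow x k : I x -> I (x ^+ k.+1).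
Proof. by move=> hx; rewrite exprS; apply: idMr => //; apply: Opow; apply: idO hx. Qed.
End Ideals.

Lemma ideal_principal g : O g -> is_ideal O (principal O g).
Proof.
move=> hg; split; last by move=> x [r [hr ->]]; apply: OM.
split.
- by exists 0; rewrite mulr0; split => //; apply: O0.
- by move=> x y [r [hr ->]] [s [hs ->]]; exists (r + s); rewrite mulrDr; split => //; apply: OD.
- by move=> r x hr [s [hs ->]]; exists (r * s); split; [apply: OM | rewrite mulrCA].
Qed.

Lemma ideal_add A B : is_ideal O A -> is_ideal O B -> is_ideal O (idadd A B).
Proof.
move=> hA hB; split; last by move=> x [y [z [hy [hz ->]]]]; apply: OD; [apply: (idO hA)|apply: (idO hB)].
split.
- by exists 0, 0; rewrite addr0; split; [apply: id0|split => //; apply: id0].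
- move=> x y [y1 [z1 [h1 [h2 ->]]]] [y2 [z2 [h3 [h4 ->]]]]; exists (y1 + y2), (z1 + z2).
  by split; [apply: idD|split; [apply: idD|rewrite addrACA]].
- move=> r x hr [y [z [hy [hz ->]]]]; exists (r * y), (r * z).
  by split; [apply: idM|split; [apply: idM|rewrite mulrDr]].
Qed.

Lemma coprime1 A B : is_ideal O A -> is_ideal O B -> idadd A B 1 -> coprime_to O A B.
Proof.
move=> hA hB [y [z [hy [hz e]]]] x; split.
  by move=> [u [v [hu [hv ->]]]]; apply: OD; [apply: (idO hA)|apply: (idO hB)].
move=> hx; exists (x * y), (x * z); split; first by apply: idM.
by split; [apply: idM|rewrite -mulrDr -e mulr1].
Qed.

Lemma coprime1E (A B : K -> Prop) : coprime_to O A B -> idadd A B 1.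
Proof. by move=> h; apply/h. Qed.

Definition cong x y := exists w, O w /\ x - y = N * w.

Definition Sset (J : K -> Prop) : {set {ffun 'I_(\dim {:K}) -> 'I_n.+1}} :=
  [set c | pb (exists x, J x /\ O x /\ cls x = c)].

Lemma Sset_le J : (#|Sset J| <= #|{ffun 'I_(\dim {:K}) -> 'I_n.+1}|)%N.
Proof. exact: max_card. Qed.

Lemma grow J1 J2 : is_ideal O J1 -> J1 N -> is_ideal O J2 -> subsetK J1 J2 ->
  forall x, J2 x -> ~ J1 x -> (#|Sset J1| < #|Sset J2|)%N.
Proof.
move=> h1 hN h2 s12 x hx nx; apply: proper_card; apply/properP; split.
  apply/subsetP => c; rewrite !inE => /pbP [y [hy [oy e]]]; apply/pbP.
  by exists y; split; [apply: s12|].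
exists (cls x); rewrite inE; first by apply/pbP; exists x; split => //; split => //; apply: (idO h2).
apply/negP => /pbP [y [hy [oy e]]]; apply: nx.
have [w [ow ew]] := cls_cong (idO h2 hx) oy (esym e).
by rewrite -(subrK y x) ew; apply: (idD h1) => //; apply: (idMr h1).
Qed.

Lemma pigeon x : exists i j, (i < j)%N /\ cls (x ^+ i) = cls (x ^+ j).
Proof.
apply: Classical_Prop.NNPP => H.
pose f (i : 'I_(#|{ffun 'I_(\dim {:K}) -> 'I_n.+1}|.+1)) := cls (x ^+ i).
have inj : injective f.
  move=> i j e; apply: val_inj; case: (ltngtP i j) => // h; exfalso; apply: H.
  - by exists i, j.
  - by exists j, i.
by have := leq_card f inj; rewrite card_ord ltnn.
Qed.

Lemma prime_pow P x k : is_prime_ideal O P -> O x -> P (x ^+ k) -> P x.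
Proof.
case=> hPi n1 pr ox; elim: k => [|k IH]; first by rewrite expr0.
rewrite exprS => h; case: (pr _ _ ox (Opow k ox) h) => //; exact: IH.
Qed.

Let C := #|{ffun 'I_(\dim {:K}) -> 'I_n.+1}|.

Lemma prime_above_aux : forall k J, (C - #|Sset J|)%N = k -> is_ideal O J -> J N -> ~ J 1 ->
  exists P, is_prime_ideal O P /\ subsetK J P.
Proof.
  elim/ltn_ind => k IH J ek hJ hN n1.
  apply: Classical_Prop.NNPP => Hno; apply: (Hno); exists J; split => //.
  split => // a c oa oc hac; apply: Classical_Prop.NNPP => hn.
  have step : forall a, O a -> ~ J a -> idadd J (principal O a) 1.
    move=> a' oa' na; apply: Classical_Prop.NNPP => n1a; apply: (Hno).
    have hJa := ideal_add hJ (ideal_principal oa').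
    have sub : subsetK J (idadd J (principal O a')).
      move=> y hy; exists y, 0; split => //; split; last by rewrite addr0.
      by exists 0; rewrite mulr0; split => //; apply: O0.
    have ha' : idadd J (principal O a') a'.
      exists 0, a'; split; first exact: (id0 hJ).
      by split; [exists 1; rewrite mulr1|rewrite add0r].
    have lt := grow hJ hN hJa sub ha' na.
    have le := Sset_le (idadd J (principal O a')).
    have [|P [hP sP]] := IH _ _ _ erefl hJa (sub _ hN) n1a.
      rewrite -ek; apply: ltn_sub2l => //; exact: leq_trans lt le.
    by exists P; split => // y hy; apply: sP; apply: sub.
  have [y1 [z1 [hy1 [[r1 [or1 ez1]] e1]]]] := step a oa (fun h => hn (or_introl h)).
  have [y2 [z2 [hy2 [[r2 [or2 ez2]] e2]]]] := step c oc (fun h => hn (or_intror h)).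
  apply: n1; rewrite -[1]mulr1 {1}e1 e2 ez1 ez2.
  have -> : (y1 + a * r1) * (y2 + c * r2) = y1 * (y2 + c * r2) + (y2 * (a * r1) + (a * c) * (r1 * r2)) by ring.
  have oy2 := idO hJ hy2.
  apply: (idD hJ); first by apply: (idMr hJ) => //; apply: OD => //; apply: OM.
  apply: (idD hJ); first by apply: (idMr hJ) => //; apply: OM.

  by apply: (idMr hJ) => //; apply: OM.
Qed.

Lemma prime_above J : is_ideal O J -> J N -> ~ J 1 ->
  exists P, is_prime_ideal O P /\ subsetK J P.
Proof. by move=> hJ hN n1; apply: (prime_above_aux erefl). Qed.

Lemma part1a M1 M2 : is_ideal O M1 -> M1 N -> is_ideal O M2 ->
  (forall P, is_prime_ideal O P -> subsetK M1 P -> subsetK M2 P) ->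
  forall A, I_m O M2 A -> I_m O M1 A.
Proof.
move=> h1 hN h2 H A [hA cop]; split => //; apply: coprime1 => //.
apply: Classical_Prop.NNPP => n1.
have hJ := ideal_add hA h1.
have JN : idadd A M1 N by exists 0, N; split; [exact: id0 hA|split; [|rewrite add0r]].
have [P [hP sP]] := prime_above hJ JN n1.
have s1 : subsetK M1 P.
  by move=> z hz; apply: sP; exists 0, z; split; [exact: id0 hA|split; [|rewrite add0r]].
have sA : subsetK A P.
  by move=> y hy; apply: sP; exists y, 0; split => //; split; [exact: id0 h1|rewrite addr0].
have s2 := H P hP s1.
have [y [z [hy [hz e]]]] := coprime1E cop.
case: hP => hPi nP1 _; apply: nP1; rewrite e; apply: (idD hPi); [exact: sA|exact: s2].
Qed.

Lemma part1b M1 M2 : is_ideal O M1 -> M1 N -> is_ideal O M2 ->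
  (forall A, I_m O M2 A -> I_m O M1 A) ->
  forall P, is_prime_ideal O P -> subsetK M1 P -> subsetK M2 P.
Proof.
move=> h1 hN h2 H P hP s1 x hx; apply: Classical_Prop.NNPP => nx.
have ox := idO h2 hx.
have [i [j [lij e]]] := pigeon x.
have [w [ow ew]] := cls_cong (Opow i ox) (Opow j ox) e.
have ej : x ^+ j = x ^+ i * x ^+ (j - i) by rewrite -exprD subnKC // ltnW.
have hPi : is_ideal O P by case: hP.
have : P (x ^+ i * (1 - x ^+ (j - i))).
  by rewrite mulrBr mulr1 -ej ew; apply: (idMr hPi) => //; apply: s1.
case: (hP) => _ nP1 pr.
case/pr; [exact: Opow|apply: OB => //; exact: Opow| |].
  by move/(prime_pow hP ox).
move=> h1p.
have cop : coprime_to O P M2.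
  apply: coprime1 => //; exists (1 - x ^+ (j - i)), (x ^+ (j - i)).
  split => //; split; last by rewrite subrK.
  by rewrite -(subnSK lij); apply: (idpow h2).
have [_ cop1] := H P (conj hPi cop).
have [y [z [hy [hz e1]]]] := coprime1E cop1.
by apply: nP1; rewrite e1; apply: (idD hPi) => //; apply: s1.
Qed.

Lemma cong_sym x y : cong x y -> cong y x.
Proof. by move=> [w [ow e]]; exists (- w); split; [apply: ON|rewrite mulrN -e opprB]. Qed.

Lemma cong_trans x y z : cong x y -> cong y z -> cong x z.
Proof.
move=> [w1 [o1 e1]] [w2 [o2 e2]]; exists (w1 + w2); split; first by apply: OD.
by rewrite mulrDr -e1 -e2 addrA subrK.
Qed.

Lemma idem_pow m : O m -> exists t, (0 < t)%N /\ cong (m ^+ t * m ^+ t) (m ^+ t).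
Proof.
move=> om; have [i [j [lij e]]] := pigeon m.
have [w [ow ew]] := cls_cong (Opow i om) (Opow j om) e.
set p := (j - i)%N.
have p0 : (0 < p)%N by rewrite subn_gt0.
have hA : forall k, (i <= k)%N -> cong (m ^+ k) (m ^+ (k + p)).
  move=> k hk; exists (m ^+ (k - i) * w); split; first by apply: OM => //; apply: Opow.
  have -> : m ^+ k = m ^+ (k - i) * m ^+ i by rewrite -exprD subnK.
  have -> : m ^+ (k + p) = m ^+ (k - i) * m ^+ j.
    by rewrite -exprD; congr (_ ^+ _); rewrite /p; lia.
  by rewrite -mulrBr ew mulrCA.
have hB : forall a k, (i <= k)%N -> cong (m ^+ k) (m ^+ (k + a * p)).
  elim=> [|a IH] k hk; first by rewrite mul0n addn0; exists 0; split; [apply: O0|rewrite subrr mulr0].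
  apply: cong_trans (IH k hk) _.
  have -> : (k + a.+1 * p = (k + a * p) + p)%N by lia.
  by apply: hA; lia.
exists (i.+1 * p)%N; split; first by rewrite muln_gt0.
rewrite -exprD; apply: cong_sym; apply: hB.
by nia.
Qed.

Definition Mt f := idadd (principal O N) (principal O f).

Lemma ON_ : O N. Proof. exact: Onat. Qed.

Lemma Mt_ideal f : O f -> is_ideal O (Mt f).
Proof. by move=> hf; apply: ideal_add; apply: ideal_principal => //; apply: ON_. Qed.

Lemma Mt_N f : Mt f N.
Proof.
exists N, 0; split; first by exists 1; rewrite mulr1; split.
by split; [exists 0; rewrite mulr0; split => //; apply: O0|rewrite addr0].
Qed.

Lemma Mt_f f : Mt f f.
Proof.
exists 0, f; split; first by exists 0; rewrite mulr0; split => //; apply: O0.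
by split; [exists 1; rewrite mulr1; split|rewrite add0r].
Qed.

Section Part3.
Variable M : K -> Prop.
Hypothesis hM : is_ideal O M.
Hypothesis hMN : M N.

Lemma f_exists_aux : forall k f, (C - #|Sset (Mt f)|)%N = k -> M f -> cong (f * f) f ->
  exists f', [/\ M f', cong (f' * f') f' & forall e, M e -> cong (e * e) e -> Mt f' e].
Proof.
elim/ltn_ind => k IH f ek hf cf.
apply: Classical_Prop.NNPP => Hno; apply: (Hno); exists f; split => //.
move=> e he ce; apply: Classical_Prop.NNPP => ne; apply: (Hno).
have ofx := idO hM hf; have oe := idO hM he.
set f' := f + e - f * e.
have ofp : O f' by apply: OB; [apply: OD|apply: OM].
have hf' : M f' by apply: (idB hM); [apply: (idD hM)|apply: (idMr hM)].
case: cf => [w1 [ow1 ew1]]; case: ce => [w2 [ow2 ew2]].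
have cf' : cong (f' * f') f'.
  exists (w1 * (1 - e) ^+ 2 + (1 - f) * w2); split.
    by apply: OD; apply: OM => //; [apply: Opow; apply: OB|apply: OB].
  have -> : f' * f' - f' = (f * f - f) * (1 - e) ^+ 2 + (1 - f) * (e * e - e) by rewrite /f'; ring.
  by rewrite ew1 ew2; ring.
have sub : subsetK (Mt f) (Mt f').
  move=> x [y [z [[r1 [or1 ->]] [[r2 [or2 ->]] ->]]]].
  exists (N * (r1 - w1 * (1 - e) * r2)), (f' * (f * r2)); split.
    by exists (r1 - w1 * (1 - e) * r2); split => //; apply: OB => //; apply: OM => //; apply: OM => //; apply: OB.
  split; first by exists (f * r2); split => //; apply: OM.
  have E : f * f' - f = (f * f - f) * (1 - e) by rewrite /f'; ring.
  rewrite ew1 in E.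
  have E' : f * f' = f + N * w1 * (1 - e) by rewrite -E; ring.
  by rewrite mulrA [f' * f]mulrC E'; ring.
have ef' : Mt f' e.
  exists (N * (- (w2 * (1 - f)))), (f' * e); split.
    by exists (- (w2 * (1 - f))); split => //; apply: ON; apply: OM => //; apply: OB.
  split; first by exists e.
  have E : e * f' - e = (e * e - e) * (1 - f) by rewrite /f'; ring.
  rewrite ew2 in E.
  have E' : e * f' = e + N * w2 * (1 - f) by rewrite -E; ring.
  by rewrite [f' * e]mulrC E'; ring.
have lt := grow (Mt_ideal ofx) (Mt_N f) (Mt_ideal ofp) sub ef' ne.
have le := Sset_le (Mt f').
have [|g [hg1 hg2 hg3]] := IH _ _ f' erefl hf' cf'.
  by rewrite -ek; apply: ltn_sub2l => //; exact: leq_trans lt le.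
by exists g; split.
Qed.
End Part3.

Definition Bt f := idadd (principal O N) (principal O (1 - f)).

Lemma N_neq0 : N != 0.
Proof.
have : in_alg K (n.+1%:R : rat) != 0 by rewrite fmorph_eq0 pnatr_eq0.
by rewrite rmorph_nat.
Qed.

Lemma Mt_inv f : O f -> cong (f * f) f -> inv_integral O (Mt f).
Proof.
move=> hf [w [ow ew]]; split; first exact: Mt_ideal.
have hB : is_ideal O (Bt f) by apply: ideal_add; apply: ideal_principal; [apply: ON_|apply: OB].
exists (Bt f), N; split => //; split; first exact: N_neq0.
move=> x; split.
  move=> [s [hs ->]]; elim: s hs => [|p s IH] hs.
    by rewrite big_nil; exists 0; rewrite mulr0; split => //; apply: O0.
  rewrite big_cons.
  have [r [or er]] : principal O N (p.1 * p.2).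
    have [[a [c [[r1 [or1 ea]] [[r2 [or2 ec]] ->]]]] [a' [c' [[r3 [or3 ea']] [[r4 [or4 ec']] ->]]]]] := hs p (mem_head _ _).
    rewrite ea ec ea' ec'.
    exists (r1 * N * r3 + r1 * (1 - f) * r4 + f * r2 * r3 - w * (r2 * r4)); split.
      by apply: OB; [apply: OD; [apply: OD|]; apply: OM => //; apply: OM => //; try apply: ON_; try apply: OB|apply: OM => //; apply: OM].
    have -> : (N * r1 + f * r2) * (N * r3 + (1 - f) * r4) =
      N * (r1 * N * r3 + r1 * (1 - f) * r4 + f * r2 * r3) - (f * f - f) * (r2 * r4) by ring.
    by rewrite ew; ring.
  have [r' [or' er']] : principal O N (\sum_(q <- s) q.1 * q.2).
    by apply: IH => q hq; apply: hs; rewrite inE hq orbT.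
  by exists (r + r'); split; [apply: OD|rewrite er er' mulrDr].
move=> [r [or ->]]; exists [:: (f, N * r); (N * r, 1 - f)]; split.
  move=> p; rewrite !inE => /orP [] /eqP -> /=; split.
  - exact: Mt_f.
  - exists (N * r), 0; split; first by exists r.
    by split; [exists 0; rewrite mulr0; split => //; apply: O0|rewrite addr0].
  - exists (N * r), 0; split; first by exists r.
    by split; [exists 0; rewrite mulr0; split => //; apply: O0|rewrite addr0].
  - exists 0, (1 - f); split; first by exists 0; rewrite mulr0; split => //; apply: O0.
    by split; [exists 1; rewrite mulr1; split => //|rewrite add0r].
by rewrite !big_cons big_nil /=; ring.
Qed.

Lemma part3 M : is_ideal O M -> M N -> exists Mt',
  [/\ inv_integral O Mt', subsetK Mt' M & forall A, I_m O M A <-> I_m O Mt' A].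
Proof.
move=> hM hMN.
have c00 : cong (0 * 0) 0 by exists 0; split; [apply: O0|rewrite mul0r subr0 mulr0].
have [f [hf cf hfe]] := f_exists_aux hM (erefl _) (id0 hM) c00.
have ofx := idO hM hf.
have sMt : subsetK (Mt f) M.
  move=> x [y [z [[r1 [or1 ->]] [[r2 [or2 ->]] ->]]]].
  by apply: (idD hM); apply: (idMr hM).
exists (Mt f); split => //; first exact: Mt_inv.
move=> A; split.
  apply: (part1a (Mt_ideal ofx) (Mt_N f) hM).
  move=> P hP sP m hm.
  have [t [t0 ct]] := idem_pow (idO hM hm).
  apply: (prime_pow (k := t) hP (idO hM hm)); apply: sP; apply: hfe => //.
  by rewrite -(prednK t0); apply: (idpow hM).
apply: (part1a hM hMN (Mt_ideal ofx)).
by move=> P hP sP x hx; apply: sP; apply: sMt.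
Qed.

End Modn.

Lemma nonzero_N M : is_ideal O M -> nonzero_set M -> exists n, M (n.+1%:R).
Proof.
move=> hM [m [hm m0]].
have [k [k0 ok]] := denom_exists m^-1.
exists k.-1; rewrite prednK //.
by rewrite -(mulfVK m0 k%:R); apply: (idM hM).
Qed.

Lemma J_mono M1 M2 : (forall A, I_m O M2 A -> I_m O M1 A) -> forall A, J_m O M2 A -> J_m O M1 A.
Proof.
move=> H A [A0 [B0 [i0 j0 c0 d0 e]]]; exists A0, B0; split => //.
  by case: (H A0 (conj i0.1 c0)).
by case: (H B0 (conj j0.1 d0)).
Qed.

Lemma main_sec M1 M2 :
  is_ideal O M1 -> nonzero_set M1 ->
  is_ideal O M2 -> nonzero_set M2 ->
  [/\ ((forall P, is_prime_ideal O P -> subsetK M1 P -> subsetK M2 P) <->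
       (forall A, I_m O M2 A -> I_m O M1 A)),
      ((forall A, I_m O M2 A -> I_m O M1 A) ->
       (forall A, J_m O M2 A -> J_m O M1 A)) &
      (forall M : K -> Prop, is_ideal O M -> nonzero_set M ->
        exists Mt : K -> Prop,
          [/\ inv_integral O Mt, subsetK Mt M,
              (forall A, I_m O M A <-> I_m O Mt A) &
              (forall A, J_m O M A <-> J_m O Mt A)])].
Proof.
move=> h1 nz1 h2 nz2; have [n hN] := nonzero_N h1 nz1; split.
- by split; [apply: part1a h1 hN h2|apply: part1b h1 hN h2].
- exact: J_mono.
move=> M hM nzM; have [n' hN'] := nonzero_N hM nzM.
have [Mt' [i s e]] := part3 hM hN'.
exists Mt'; split => // A; split; apply: J_mono => B; by case: (e B).
Qed.

End Ord.


Theorem lemma5p9 (K : fieldExtType rat) (O : K -> Prop) (M1 M2 : K -> Prop) :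
  is_order O ->
  is_ideal O M1 -> nonzero_set M1 ->
  is_ideal O M2 -> nonzero_set M2 ->
  [/\ ((forall P, is_prime_ideal O P -> subsetK M1 P -> subsetK M2 P) <->
       (forall A, I_m O M2 A -> I_m O M1 A)),
      ((forall A, I_m O M2 A -> I_m O M1 A) ->
       (forall A, J_m O M2 A -> J_m O M1 A)) &
      (forall M : K -> Prop, is_ideal O M -> nonzero_set M ->
        exists Mt : K -> Prop,
          [/\ inv_integral O Mt, subsetK Mt M,
              (forall A, I_m O M A <-> I_m O Mt A) &
              (forall A, J_m O M A <-> J_m O Mt A)])].
Proof.
case=> O1 OB OM [b [Hspan Hind]].
exact: (main_sec O1 OB OM Hspan Hind).
Qed.
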